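(* Let $\varepsilon,\varepsilon',\delta$ be positive constants with $3\varepsilon+\varepsilon/\delta\le\varepsilon'$, and let $(V_1,V_2,V_3)$ be an $\varepsilon$-typical $(\varepsilon,p)$-regular triple in a graph, where the density $d_{ij}p$ of each pair $(V_i,V_j)$ is at least $\delta p$. Then at most $4\varepsilon d_{23}p|V_2||V_3|$ edges between $V_2$ and $V_3$ are not $\varepsilon'$-good.
   Context: For disjoint $X,Y$, $d(X,Y)=e(X,Y)/(|X||Y|)$; $x=(1\pm a)y$ means $x\in[(1-a)y,(1+a)y]$. A pair $(X,Y)$ is $(\varepsilon,p)$-regular if $|d(X,Y)-d(X',Y')|\le\varepsilon p$ for all $X'\subset X,Y'\subset Y$ with $|X'|\ge\varepsilon|X|,|Y'|\ge\varepsilon|Y|$; a triple is $(\varepsilon,p)$-regular if all three pairs are. Write $d(V_i,V_j)=d_{ij}p$. For $\{i,j,k\}=\{1,2,3\}$, $v\in V_i$ is $\varepsilon$-typical if with $N_j=N(v)\cap V_j$, $N_k=N(v)\cap V_k$: $|N_j|=(1\pm\varepsilon)d_{ij}p|V_j|$, $|N_k|=(1\pm\varepsilon)d_{ik}p|V_k|$, and there exist $N_j'\subset N_j,N_k'\subset N_k$ with $|N_j'|\ge(1-\varepsilon)|N_j|,|N_k'|\ge(1-\varepsilon)|N_k|$ such that $(N_j',N_k')$ is $(\varepsilon,p)$-regular of density $(1\pm\varepsilon)d_{jk}p$. The triple is $\varepsilon$-typical if it is $(\varepsilon,p)$-regular and for each $i$ all but at most $\varepsilon|V_i|$ vertices of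 $V_i$ are $\varepsilon$-typical. An edge between $V_2$ and $V_3$ is $\varepsilon'$-good if its endpoints have at least $(1-\varepsilon')d_{12}d_{13}p^2|V_1|$ common neighbours in $V_1$. *)

(* Defs.v *)
From mathcomp Require Import all_boot all_order all_algebra.
Set Implicit Arguments. Unset Strict Implicit. Unset Printing Implicit Defensive.
Import Order.TTheory GRing.Theory Num.Theory.
Local Open Scope ring_scope.

(* A graph is a relation adj on a finite type T (assumed symmetric and
   irreflexive in the theorem). *)

Definition edges (T : finType) (adj : rel T) (X Y : {set T}) : nat :=
  #|[set uv : T * T | [&& uv.1 \in X, uv.2 \in Y & adj uv.1 uv.2]]|.

Definition dens (R : realFieldType) (T : finType) (adj : rel T)
  (X Y : {set T}) : R :=
  (edges adj X Y)%:R / (#|X| * #|Y|)%:R.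

(* x = (1 +- a) y *)
Definition pm (R : realFieldType) (x a y : R) : bool :=
  ((1 - a) * y <= x) && (x <= (1 + a) * y).

Definition reg_pair (R : realFieldType) (T : finType) (adj : rel T)
  (eps p : R) (X Y : {set T}) : Prop :=
  forall X' Y' : {set T}, X' \subset X -> Y' \subset Y ->
    eps * #|X|%:R <= #|X'|%:R -> eps * #|Y|%:R <= #|Y'|%:R ->
    `|dens R adj X Y - dens R adj X' Y'| <= eps * p.

Definition reg_triple (R : realFieldType) (T : finType) (adj : rel T)
  (eps p : R) (V1 V2 V3 : {set T}) : Prop :=
  [/\ reg_pair adj eps p V1 V2, reg_pair adj eps p V1 V3
    & reg_pair adj eps p V2 V3].

Definition nbhd (T : finType) (adj : rel T) (v : T) : {set T} :=
  [set u | adj v u].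

(* v in Vi is eps-typical, where {Vi,Vj,Vk} = {V1,V2,V3}.
   Note d_ij p = d(Vi,Vj). *)
Definition typical_vertex (R : realFieldType) (T : finType) (adj : rel T)
  (eps p : R) (Vi Vj Vk : {set T}) (v : T) : Prop :=
  let Nj := nbhd adj v :&: Vj in
  let Nk := nbhd adj v :&: Vk in
  [/\ pm (#|Nj|%:R) eps (dens R adj Vi Vj * #|Vj|%:R),
      pm (#|Nk|%:R) eps (dens R adj Vi Vk * #|Vk|%:R) &
      (exists Nj' Nk' : {set T},
        [/\ Nj' \subset Nj, Nk' \subset Nk,
            ((1 - eps) * #|Nj|%:R <= #|Nj'|%:R) /\
            ((1 - eps) * #|Nk|%:R <= #|Nk'|%:R),
            reg_pair adj eps p Nj' Nk' &
            pm (dens R adj Nj' Nk') eps (dens R adj Vj Vk)])].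

Definition mostly_typical (R : realFieldType) (T : finType) (adj : rel T)
  (eps p : R) (Vi Vj Vk : {set T}) : Prop :=
  exists S : {set T}, [/\ S \subset Vi, #|S|%:R <= eps * #|Vi|%:R &
    forall v, v \in Vi :\: S -> typical_vertex adj eps p Vi Vj Vk v].

Definition typical_triple (R : realFieldType) (T : finType) (adj : rel T)
  (eps p : R) (V1 V2 V3 : {set T}) : Prop :=
  [/\ reg_triple adj eps p V1 V2 V3,
      mostly_typical adj eps p V1 V2 V3,
      mostly_typical adj eps p V2 V1 V3 &
      mostly_typical adj eps p V3 V1 V2].

Definition good_edge (R : realFieldType) (T : finType) (adj : rel T)
  (eps' : R) (V1 V2 V3 : {set T}) (u w : T) : bool :=
  (1 - eps') * dens R adj V1 V2 * dens R adj V1 V3 * #|V1|%:R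
    <= #|nbhd adj u :&: nbhd adj w :&: V1|%:R.

(* Main.v *)
Require Import Defs.
From mathcomp Require Import all_boot all_order all_algebra.
From mathcomp Require Import ring lra.
Import Order.TTheory GRing.Theory Num.Theory.
Local Open Scope ring_scope.

Lemma card_pairs (T : finType) (A : {set T}) (P : T -> T -> bool) :
  #|[set uw : T * T | (uw.1 \in A) && P uw.1 uw.2]|
    = (\sum_(u in A) #|[set w | P u w]|)%N.
Proof.
rewrite -sum1_card.
rewrite (eq_bigl (fun uw : T * T => (uw.1 \in A) && P uw.1 uw.2)); last first.
  by move=> uw; rewrite inE.
rewrite -(pair_big_dep (fun u => u \in A) P (fun _ _ => 1%N)).
apply: eq_bigr => u _; rewrite -sum1_card; apply: eq_bigl => w; by rewrite inE.
Qed.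

Lemma edges_sum (T : finType) (adj : rel T) (X Y : {set T}) :
  edges adj X Y = (\sum_(x in X) #|nbhd adj x :&: Y|)%N.
Proof.
rewrite /edges (@card_pairs T X (fun u w => (w \in Y) && adj u w)); apply: eq_bigr => x _.
by apply: eq_card => w; rewrite !inE andbC.
Qed.

Lemma edges_sym (T : finType) (adj : rel T) (X Y : {set T}) :
  symmetric adj -> edges adj X Y = edges adj Y X.
Proof.
move=> sym; rewrite /edges.
rewrite -(card_imset _ (@inv_inj _ (fun uw : T * T => (uw.2, uw.1)) _)); last by case.
apply: eq_card => [[a b]]; apply/imsetP/idP.
  by case=> [[c d]]; rewrite inE /= => /and3P[h1 h2 h3] [-> ->]; rewrite inE /= h1 h2 sym h3.
rewrite inE /= => /and3P[h1 h2 h3]; exists (b, a) => //; by rewrite inE /= h1 h2 sym h3.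
Qed.
Lemma arith1 (R:realFieldType) (e e' a d12 d13 v n1 n1' b dB p : R) :
 0 < e -> 0 <= a -> 3*e + a <= e' -> e' < 1 -> 0 < d12 -> 0 < d13 -> 0 < v -> (e* p <= a*d13) ->
 (1-e)*(d12*v) <= n1 -> (1-e)*n1 <= n1' -> 0 < b -> (1-e)*d13 - e* p <= dB ->
 dB*n1'*b < b*((1-e')*d12*d13*v) -> False.
Proof.
move=> he ha hee he1 hd12 hd13 hv hp hn1 hn1' hb hdB hlt.
set c := (1-e)*d13 - e* p.
have hc : (1-e-a)*d13 <= c.
  rewrite /c; have -> : (1-e-a)*d13 = (1-e)*d13 - a*d13 by ring.
  lra.
have hc2 : (1 - e') * d13 <= (1-e-a)*(1-e)^+2*d13.
  have h1 : 0 <= 1-e-a by lra.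
  have h2 : 1 - 3*e - a <= (1-e-a)*(1-e)^+2.
    have q1 : 0 <= e*e*(3-e-a) by apply: mulr_ge0; [apply: mulr_ge0; lra | lra].
    have q2 : 0 <= 2*a*e by apply: mulr_ge0; [apply: mulr_ge0; lra | lra].
    have -> : (1-e-a)*(1-e)^+2 = 1 - 3*e - a + (e*e*(3-e-a) + 2*a*e) by rewrite expr2; ring.
    lra.
  by apply: ler_wpM2r; lra.
have hn1'0 : 0 <= n1'.
  have q : 0 <= (1-e)*(d12*v) by apply: mulr_ge0; [lra | apply: mulr_ge0; lra].
  have : 0 <= (1-e)*n1 by apply: mulr_ge0; lra.
  lra.
have k1 : dB * n1' < (1-e')*d12*d13*v.
  by rewrite -(ltr_pM2r hb) [X in _ < X]mulrC.
have c0 : 0 <= c.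
  have q : 0 <= (1 - e') * d13 by apply: mulr_ge0; lra.
  have : (1 - e')*d13 <= (1-e-a)*d13 by apply: ler_wpM2r; lra.
  lra.
have k2 : c * n1' <= dB * n1' by apply: ler_wpM2r.
have k3 : (1-e)^+2*(d12*v) <= n1'.
  rewrite expr2 -mulrA; apply: le_trans hn1'; apply: ler_wpM2l; lra.
have k4 : c * ((1-e)^+2*(d12*v)) <= c*n1' by apply: ler_wpM2l.
have dv : 0 < d12 * v by apply: mulr_gt0.
have k6 : (1-e-a)*(1-e)^+2*d13 * (d12*v) <= c * ((1-e)^+2*(d12*v)).
  rewrite mulrA; apply: ler_wpM2r; first lra.
  have -> : (1 - e - a) * (1 - e) ^+ 2 * d13 = (1-e)^+2 * ((1-e-a)*d13) by ring.
  rewrite (mulrC c); apply: ler_wpM2l; first exact: sqr_ge0.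
  done.
have k5 : (1 - e') * d13 * (d12*v) <= (1-e-a)*(1-e)^+2*d13 * (d12*v).
  by apply: ler_wpM2r; lra.
have : (1-e')*d12*d13*v = (1 - e') * d13 * (d12*v) by ring.
lra.
Qed.

Lemma dens_ge0 (R : realFieldType) (T : finType) (adj : rel T) (X Y : {set T}) :
  0 <= dens R adj X Y.
Proof. by rewrite /dens divr_ge0. Qed.

Lemma dens_pos_card (R : realFieldType) (T : finType) (adj : rel T) (X Y : {set T}) :
  0 < dens R adj X Y -> (0 < #|X|)%N /\ (0 < #|Y|)%N.
Proof.
rewrite /dens; case: (posnP #|X|) => [->|hx]; first by rewrite mul0n invr0 mulr0 ltxx.
case: (posnP #|Y|) => [->|hy]; first by rewrite muln0 invr0 mulr0 ltxx.
by [].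
Qed.

Lemma edges_dens (R : realFieldType) (T : finType) (adj : rel T) (X Y : {set T}) :
  (0 < #|X|)%N -> (0 < #|Y|)%N ->
  (edges adj X Y)%:R = dens R adj X Y * #|X|%:R * #|Y|%:R :> R.
Proof.
move=> hx hy; rewrite /dens -mulrA -natrM divfK //.
by rewrite pnatr_eq0 -lt0n muln_gt0 hx hy.
Qed.

Lemma typ_bound (R : realFieldType) (T : finType) (adj : rel T)
  (eps eps' delta p : R) (V1 V2 V3 : {set T}) (u : T) :
  symmetric adj -> 0 < eps -> 0 < delta -> 0 < p -> eps' < 1 ->
  3 * eps + eps / delta <= eps' ->
  delta * p <= dens R adj V1 V2 -> delta * p <= dens R adj V1 V3 ->
  typical_vertex adj eps p V2 V1 V3 u ->
  (#|[set w | [&& w \in V3, adj u w & ~~ good_edge adj eps' V1 V2 V3 u w]]|)%:R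
    <= 2 * eps * (#|nbhd adj u :&: V3|)%:R :> R.
Proof.
move=> sym he hd hp he1 hcond h12 h13.
rewrite /typical_vertex /=.
case=> /andP[pm1 _] /andP[pm3 _] [N1' [N3' [s1 s3 [c1 c3] rg /andP[pmd _]]]].
set d12 := dens R adj V1 V2 in h12 pm1 *.
set d13 := dens R adj V1 V3 in h13 pmd *.
set a := eps / delta in hcond *.
have ha : 0 <= a by rewrite /a divr_ge0 // ltW.
have hpa : eps * p <= a * d13.
  have -> : eps * p = a * (delta * p) by rewrite /a mulrA divfK // gt_eqF.
  by apply: ler_wpM2l.
have dp0 : 0 < delta * p by apply: mulr_gt0.
have d12p : 0 < d12 by apply: lt_le_trans h12.
have d13p : 0 < d13 by apply: lt_le_trans h13.
have [V1p _] := (@dens_pos_card R _ _ _ _ d12p).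
have hd21 : dens R adj V2 V1 = d12 by rewrite /d12 /dens edges_sym // mulnC.
rewrite hd21 in pm1.
set Bad := [set w | _].
set N1 := nbhd adj u :&: V1 in pm1 s1 c1.
set N3 := nbhd adj u :&: V3 in pm3 s3 c3 *.
set B := Bad :&: N3'.
have hB : #|B|%:R <= eps * #|N3'|%:R :> R.
  rewrite leNgt; apply/negP => hlt.
  have b0 : 0 < #|B|%:R :> R.
    apply: le_lt_trans hlt; apply: mulr_ge0; [exact: ltW | exact: ler0n].
  have bpos : (0 < #|B|)%N by rewrite -(ltr0n R).
  have n1pos : 0 < #|N1'|%:R :> R.
    apply: lt_le_trans c1; apply: mulr_gt0; first lra.
    apply: lt_le_trans pm1; apply: mulr_gt0; first lra.
    by apply: mulr_gt0 => //; rewrite ltr0n.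
  have n1p : (0 < #|N1'|)%N by rewrite -(ltr0n R).
  have e1 : eps <= 1 by lra.
  have reg := rg N1' B (subxx _) (subsetIr _ _) (ler_piMl (ler0n _ _) e1) (ltW hlt).
  move: reg; rewrite ler_distlC => /andP[hdB _].
  have hdB' : (1 - eps) * d13 - eps * p <= dens R adj N1' B by lra.
  have hE := @edges_dens R T adj _ _ n1p bpos.
  have hU : (edges adj N1' B)%:R < #|B|%:R * ((1 - eps') * d12 * d13 * #|V1|%:R) :> R.
    rewrite edges_sym // edges_sum natr_sum mulr_natl -sumr_const.
    apply: ltr_sum.
      case/card_gt0P: bpos => w0 hw0; apply/hasP; exists w0 => //; exact: mem_index_enum.
    move=> w hw.
    have : w \in Bad by move: hw; rewrite inE => /andP[].
    rewrite inE => /and3P[_ _]; rewrite /good_edge -ltNge => hlt2.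
    apply: le_lt_trans hlt2; rewrite ler_nat; apply: subset_leq_card.
    apply/subsetP => x; rewrite !inE => /andP[hwx hx].
    move/subsetP: s1 => /(_ x hx); rewrite !inE => /andP[hux hxV].
    by rewrite hux hwx hxV.
  apply: (@arith1 R eps eps' a d12 d13 #|V1|%:R #|N1|%:R #|N1'|%:R #|B|%:R (dens R adj N1' B) p) => //.
    by rewrite ltr0n.
  by rewrite -hE.
have sub : Bad \subset B :|: (N3 :\: N3').
  apply/subsetP => w hw; rewrite in_setU in_setI hw /=.
  case h: (w \in N3') => //=.
  by move: hw; rewrite in_setD h !inE => /and3P[-> -> _].
have hD : #|N3 :\: N3'| = (#|N3| - #|N3'|)%N by rewrite cardsD (setIidPr s3).
have hle : (#|N3'| <= #|N3|)%N by apply: subset_leq_card.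
have hcard : (#|Bad| <= #|B| + (#|N3| - #|N3'|))%N.
  rewrite -hD; apply: (leq_trans (subset_leq_card sub)).
  by rewrite cardsU leq_subr.
have hR : #|Bad|%:R <= #|B|%:R + (#|N3|%:R - #|N3'|%:R) :> R.
  by rewrite -natrB // -natrD ler_nat.
have n3ge : 0 <= #|N3|%:R :> R by exact: ler0n.
have q1 : (1 - eps) * ((1 - eps) * #|N3|%:R) <= (1 - eps) * #|N3'|%:R.
  by apply: ler_wpM2l => //; lra.
have q2 : 0 <= eps * eps * #|N3|%:R by apply: mulr_ge0 => //; apply: mulr_ge0; exact: ltW.
have q3 : (1 - eps) * ((1 - eps) * #|N3|%:R) = #|N3|%:R - 2 * eps * #|N3|%:R + eps * eps * #|N3|%:R by ring.
have q4 : (1 - eps) * #|N3'|%:R = #|N3'|%:R - eps * #|N3'|%:R by ring.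
lra.
Qed.

Theorem proposition2p12 (R : realFieldType) (T : finType) (adj : rel T)
  (eps eps' delta p : R) (V1 V2 V3 : {set T}) :
  symmetric adj -> irreflexive adj ->
  [disjoint V1 & V2] -> [disjoint V1 & V3] -> [disjoint V2 & V3] ->
  0 < eps -> 0 < eps' -> 0 < delta -> 0 < p ->
  3 * eps + eps / delta <= eps' ->
  typical_triple adj eps p V1 V2 V3 ->
  delta * p <= dens R adj V1 V2 ->
  delta * p <= dens R adj V1 V3 ->
  delta * p <= dens R adj V2 V3 ->
  (#|[set uw : T * T | [&& uw.1 \in V2, uw.2 \in V3, adj uw.1 uw.2
        & ~~ good_edge adj eps' V1 V2 V3 uw.1 uw.2]]|)%:R
    <= 4 * eps * dens R adj V2 V3 * #|V2|%:R * #|V3|%:R.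
Proof.
move=> sym irr dj12 dj13 dj23 he he' hd hp hcond [rg mt1 mt2 mt3] h12 h13 h23.
have dp0 : 0 < delta * p by apply: mulr_gt0.
have d23p : 0 < dens R adj V2 V3 by apply: lt_le_trans h23.
have [n0 v0] := @dens_pos_card R T adj _ _ d23p.
have rhs0 : 0 <= 4 * eps * dens R adj V2 V3 * #|V2|%:R * #|V3|%:R.
  have e4 : 0 <= 4 * eps by lra.
  apply: mulr_ge0; last exact: ler0n.
  apply: mulr_ge0; last exact: ler0n.
  apply: mulr_ge0 => //; exact: dens_ge0.
case: (ltP eps' 1) => he1; last first.
  have g : forall u w, good_edge adj eps' V1 V2 V3 u w.
    move=> u w; rewrite /good_edge; apply: le_trans (ler0n _ _).
    apply: mulr_le0_ge0; last exact: ler0n.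
    apply: mulr_le0_ge0; last exact: dens_ge0.
    apply: mulr_le0_ge0; last exact: dens_ge0.
    lra.
  rewrite (_ : [set uw : T * T | _] = set0) ?cards0 //.
  by apply/setP => uw; rewrite !inE g !andbF.
case: mt2 => S [sS hS typS].
rewrite (@card_pairs T V2 (fun u w => [&& w \in V3, adj u w & ~~ good_edge adj eps' V1 V2 V3 u w])).
rewrite natr_sum (big_setID S) /=.
pose F := fun u => (#|[set w | [&& w \in V3, adj u w & ~~ good_edge adj eps' V1 V2 V3 u w]]|)%:R : R.
pose N := fun u => (#|nbhd adj u :&: V3|)%:R : R.
rewrite -/(F _).
have bT : \sum_(i in V2 :\: S) F i <= 2 * eps * \sum_(i in V2 :\: S) N i.
  rewrite mulr_sumr; apply: ler_sum => u hu.
  rewrite /F /N; exact: (@typ_bound R T adj eps eps' delta p V1 V2 V3 u sym he hd hp he1 hcond h12 h13 (typS u hu)).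
have bS : \sum_(i in V2 :&: S) F i <= \sum_(i in V2 :&: S) N i.
  apply: ler_sum => u _; rewrite /F /N ler_nat; apply: subset_leq_card.
  by apply/subsetP => w; rewrite !inE => /and3P[-> -> _].
have hE : (edges adj V2 V3)%:R = \sum_(i in V2 :&: S) N i + \sum_(i in V2 :\: S) N i.
  by rewrite edges_sum natr_sum (big_setID S).
rewrite (@edges_dens R T adj _ _ n0 v0) in hE.
have X2low : #|V2 :\: S|%:R * ((1 - eps) * (dens R adj V2 V3 * #|V3|%:R)) <= \sum_(i in V2 :\: S) N i.
  rewrite mulr_natl -sumr_const; apply: ler_sum => u hu.
  by case: (typS u hu) => _ /andP[pm3 _] _.
have X1ge : 0 <= \sum_(i in V2 :&: S) N i by apply: sumr_ge0 => i _; exact: ler0n.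
have hcT : #|V2 :\: S|%:R = #|V2|%:R - #|S|%:R :> R.
  rewrite cardsD (setIidPr sS) natrB //; exact: subset_leq_card.
rewrite hcT in X2low.
have ha : 0 <= eps / delta by rewrite divr_ge0 // ltW.
have e13 : eps < 1/3 by lra.
move: bT bS hE X2low X1ge hS.
set X1 := \sum_(i in V2 :&: S) N i.
set X2 := \sum_(i in V2 :\: S) N i.
set d := dens R adj V2 V3.
set n := #|V2|%:R.
set v := #|V3|%:R.
set s := #|S|%:R.
move=> bT bS hE X2low X1ge hS.
have dv0 : 0 <= d * v by apply: mulr_ge0; [exact: dens_ge0 | exact: ler0n].
have dnv0 : 0 <= d * n * v by rewrite -mulrA (mulrC n) mulrA; apply: mulr_ge0 => //; exact: ler0n.
have r1 : (1 - 2 * eps) * ((n - s) * ((1 - eps) * (d * v))) <= (1 - 2 * eps) * X2.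
  by apply: ler_wpM2l => //; lra.
have r2 : ((1 - eps) * n) * ((1 - eps) * (d * v)) <= (n - s) * ((1 - eps) * (d * v)).
  apply: ler_wpM2r; first by apply: mulr_ge0 => //; lra.
  lra.
have r3 : (1 - 2 * eps) * (((1 - eps) * n) * ((1 - eps) * (d * v))) <= (1 - 2 * eps) * ((n - s) * ((1 - eps) * (d * v))).
  by apply: ler_wpM2l => //; lra.
have r4 : (1 - 2 * eps) * (((1 - eps) * n) * ((1 - eps) * (d * v))) = d * n * v - 4 * eps * (d * n * v) + eps * eps * (5 - 2 * eps) * (d * n * v) by ring.
have r5 : 0 <= eps * eps * (5 - 2 * eps) * (d * n * v).
  apply: mulr_ge0 => //; apply: mulr_ge0; last lra.
  by apply: mulr_ge0; apply: ltW.
have r6 : 4 * eps * d * n * v = 4 * eps * (d * n * v) by ring.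
have r7 : (1 - 2 * eps) * X2 = X2 - 2 * eps * X2 by ring.
lra.
Qed.
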